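(* Let $A$ be a Banach lattice algebra with identity $e$. The set $OI(A)$ is a Boolean algebra, with minimum $0$, maximum $e$ and operations \[\overline p=e-p,\qquad p\vee q=p+q-pq,\qquad p\wedge q=pq\qquad(p,q\in OI(A)),\] and these suprema and infima coincide with the suprema and infima of $p,q$ computed in the lattice $A$.
   Context: A Banach lattice algebra is a real Banach lattice $A$ with an associative bilinear product making it a Banach algebra such that $xy\ge0$ whenever $x,y\ge0$; identity $e$ means a multiplicative identity with $\|e\|=1$. $OI(A)=\{p\in A: p^2=p,\ 0\le p\le e\}$. *)

(* Defs.v *)
From HB Require Import structures.
From mathcomp Require Import all_boot all_order all_algebra.
From mathcomp Require Import all_classical all_reals all_analysis.
Set Implicit Arguments. Unset Strict Implicit. Unset Printing Implicit Defensive.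
Import Order.TTheory GRing.Theory Num.Theory.
Import numFieldNormedType.Exports.
Local Open Scope ring_scope.

Record BanachLatticeAlgebra (R : realType) (V : completeNormedModType R) := {
  bla_le : V -> V -> Prop;
  bla_le_refl : forall x, bla_le x x;
  bla_le_antisym : forall x y, bla_le x y -> bla_le y x -> x = y;
  bla_le_trans : forall x y z, bla_le x y -> bla_le y z -> bla_le x z;
  bla_le_add : forall x y z, bla_le x y -> bla_le (x + z) (y + z);
  bla_le_scale : forall (a : R) x y, 0 <= a -> bla_le x y -> bla_le (a *: x) (a *: y);
  bla_join : V -> V -> V;
  bla_meet : V -> V -> V;
  bla_join_ub_l : forall x y, bla_le x (bla_join x y);
  bla_join_ub_r : forall x y, bla_le y (bla_join x y);
  bla_join_least : forall x y z, bla_le x z -> bla_le y z -> bla_le (bla_join x y) z;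
  bla_meet_lb_l : forall x y, bla_le (bla_meet x y) x;
  bla_meet_lb_r : forall x y, bla_le (bla_meet x y) y;
  bla_meet_greatest : forall x y z, bla_le z x -> bla_le z y -> bla_le z (bla_meet x y);
  (* lattice norm: |x| <= |y| implies ||x|| <= ||y||, with |x| = x v (-x) *)
  bla_lattice_norm : forall x y,
    bla_le (bla_join x (- x)) (bla_join y (- y)) -> `|x| <= `|y|;
  bla_mul : V -> V -> V;
  bla_mulA : forall x y z, bla_mul x (bla_mul y z) = bla_mul (bla_mul x y) z;
  bla_mulDl : forall x y z, bla_mul (x + y) z = bla_mul x z + bla_mul y z;
  bla_mulDr : forall x y z, bla_mul x (y + z) = bla_mul x y + bla_mul x z;
  bla_mulZl : forall (a : R) x y, bla_mul (a *: x) y = a *: bla_mul x y;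
  bla_mulZr : forall (a : R) x y, bla_mul x (a *: y) = a *: bla_mul x y;
  bla_norm_mul : forall x y, `|bla_mul x y| <= `|x| * `|y|;
  bla_mul_pos : forall x y, bla_le 0 x -> bla_le 0 y -> bla_le 0 (bla_mul x y)
}.

Definition is_identity (R : realType) (V : completeNormedModType R)
  (A : BanachLatticeAlgebra V) (e : V) : Prop :=
  (forall x, bla_mul A e x = x /\ bla_mul A x e = x) /\ `|e| = 1.

Definition OI (R : realType) (V : completeNormedModType R)
  (A : BanachLatticeAlgebra V) (e : V) (p : V) : Prop :=
  bla_mul A p p = p /\ bla_le A 0 p /\ bla_le A p e.

Definition is_boolean_algebra (T : Type) (le : T -> T -> Prop) (S : T -> Prop)
  (bot top : T) (compl : T -> T) (jn mt : T -> T -> T) : Prop :=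
  (S bot /\ S top) /\
      ((forall p, S p -> S (compl p)) /\
      (forall p q, S p -> S q -> S (jn p q) /\ S (mt p q))) /\
      (forall p, S p -> le bot p /\ le p top) /\
      (forall p q, S p -> S q ->
         [/\ le p (jn p q), le q (jn p q) &
             (forall r, S r -> le p r -> le q r -> le (jn p q) r)] /\
         [/\ le (mt p q) p, le (mt p q) q &
             (forall r, S r -> le r p -> le r q -> le r (mt p q))]) /\
      (forall p q r, S p -> S q -> S r ->
         mt p (jn q r) = jn (mt p q) (mt p r)) /\
      (forall p, S p -> jn p (compl p) = top /\ mt p (compl p) = bot).

(* Main.v *)
Require Import Defs.
From HB Require Import structures.
From mathcomp Require Import all_boot all_order all_algebra.
From mathcomp Require Import all_classical all_reals all_analysis.
Import Order.TTheory GRing.Theory Num.Theory.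
Import numFieldNormedType.Exports.
Local Open Scope ring_scope.

Set Implicit Arguments. Unset Strict Implicit.
Section H.
Variables (R : realType) (V : completeNormedModType R) (A : BanachLatticeAlgebra V).
Local Notation le := (bla_le A).
Local Notation m := (bla_mul A).

Lemma gen (x a b c d : V) : x + (a+b) + (c+d) - (x + (c+a)) = d + b.
Proof.
apply/eqP; rewrite subr_eq; apply/eqP.
rewrite [RHS]addrC -[LHS]addrA -[RHS]addrA; congr (x + _).
by rewrite addrACA [c + a]addrC [d + b]addrC.
Qed.

Lemma mNl x y : m (- x) y = - m x y.
Proof. by rewrite -scaleN1r bla_mulZl scaleN1r. Qed.
Lemma mNr x y : m x (- y) = - m x y.
Proof. by rewrite -scaleN1r bla_mulZr scaleN1r. Qed.
Lemma mBl x y z : m (x - y) z = m x z - m y z.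
Proof. by rewrite bla_mulDl mNl. Qed.
Lemma mBr x y z : m x (y - z) = m x y - m x z.
Proof. by rewrite bla_mulDr mNr. Qed.

Lemma leP x y : le x y <-> le 0 (y - x).
Proof.
split=> h.
  by have := bla_le_add (- x) h; rewrite subrr.
by have := bla_le_add x h; rewrite add0r subrK.
Qed.

Lemma leD x y : le x y -> le 0 (y - x).
Proof. exact: (proj1 (@leP x y)). Qed.
Lemma leI x y : le 0 (y - x) -> le x y.
Proof. exact: (proj2 (@leP x y)). Qed.

Lemma le_add0 a b : le 0 a -> le 0 b -> le 0 (a + b).
Proof.
move=> ha hb; apply: bla_le_trans hb _.
by have := bla_le_add b ha; rewrite add0r.
Qed.

Lemma abs_pos a : le 0 a -> bla_join A a (- a) = a.
Proof.
move=> ha; apply: bla_le_antisym; last exact: bla_join_ub_l.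
apply: bla_join_least; first exact: bla_le_refl.
apply: (bla_le_trans _ ha); apply/leP; by rewrite sub0r opprK.
Qed.

Lemma norm_mono a b : le 0 a -> le a b -> `|a| <= `|b|.
Proof.
move=> ha hab; have hb := bla_le_trans ha hab.
apply: (bla_lattice_norm (b:=A)). rewrite (abs_pos ha) (abs_pos hb) //.

Qed.

Lemma abs_ge0 x : le 0 (bla_join A x (- x)).
Proof.
set u := bla_join A x (- x).
have h1 : le 0 (u - x) by apply: leD; exact: bla_join_ub_l.
have h2 : le 0 (u - - x) by apply: leD; exact: bla_join_ub_r.
have h2p : (0:R) <= 2^-1 by rewrite invr_ge0 ler0n.
have := bla_le_scale h2p (le_add0 h1 h2).
rewrite scaler0 opprK addrACA addNr addr0 scalerDr -scalerDl.
have -> : (2^-1 + 2^-1 : R) = 1.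
  by rewrite [RHS](splitr (1:R)) mul1r.
by rewrite scale1r.
Qed.

Lemma e_pos e : (forall x, m e x = x /\ m x e = x) -> `|e| = 1 -> le 0 e.
Proof.
move=> he ne.
set ep := bla_join A e 0.
set em := ep - e.
have ep0 : le 0 ep by exact: bla_join_ub_r.
have em0 : le 0 em by apply: leD; exact: bla_join_ub_l.
have eE : e = ep - em by rewrite /em opprB addrC subrK.
clearbody em.
have nep : `|ep| <= 1.
  rewrite -ne; have hh := @bla_lattice_norm R V A ep e; apply: hh; rewrite (abs_pos ep0).
  apply: bla_join_least; first exact: bla_join_ub_l.
  exact: abs_ge0.
have h1 : m ep ep = ep + m ep em.
  have := proj2 (he ep); rewrite {1}eE mBr => /eqP.
  by rewrite subr_eq => /eqP.
have h2 : m ep em = em + m em em.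
  have := proj1 (he em); rewrite {1}eE mBl => /eqP.
  by rewrite subr_eq => /eqP.
have em2 : le 0 (m em em) by exact: bla_mul_pos.
have claim : forall n : nat, exists y, `|y| <= 1 /\ le (ep + n%:R *: em) y.
  elim=> [|n [y [ny hy]]].
    by exists ep; rewrite scale0r addr0; split=> //; exact: bla_le_refl.
  exists (m ep y); split.
    apply: le_trans (bla_norm_mul _ _ _) _.
    by rewrite -[1]mul1r; apply: ler_pM.
  apply: bla_le_trans (_ : le _ (m ep (ep + n%:R *: em))) _; last first.
    by apply: leI; rewrite -mBr; apply: bla_mul_pos => //; apply: leD.
  rewrite bla_mulDr bla_mulZr h1 h2 scalerDr.
  apply: leI.
  rewrite -[n.+1]addn1 natrD scalerDl scale1r gen.
  apply: le_add0 (em2).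
  by have := bla_le_scale (ler0n R n) em2; rewrite scaler0.
have nem : `|em| = 0.
  apply/eqP; rewrite eq_le normr_ge0 andbT; apply/negP => /negP.
  rewrite -ltNge => hpos.
  set n := Num.Def.archi_bound (`|em|^-1).
  have hinv : 0 < `|em|^-1 by rewrite invr_gt0.
  have hn := archi_boundP (ltW hinv).
  have [y [ny hy]] := claim n.
  have h3 : `|n%:R *: em| <= 1.
    apply: le_trans ny; apply: norm_mono.
      by have := bla_le_scale (a := n%:R) (ler0n _ _) em0; rewrite scaler0.
    apply: bla_le_trans hy; apply/leP; by rewrite addrK.
  rewrite normrZ ger0_norm // in h3.
  have : `|em|^-1 * `|em| < n%:R * `|em| by rewrite ltr_pM2r.
  by rewrite mulVf ?gt_eqF // => /lt_le_trans /(_ h3); rewrite ltxx.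
have : em = 0 by apply/eqP; rewrite -normr_eq0 nem.
by move=> em_0; rewrite eE em_0 subr0.
Qed.

Lemma key e p q r : (forall x, m e x = x /\ m x e = x) ->
  m p p = p -> le 0 p -> le p e -> le 0 r -> le r p -> le r q ->
  r = m p r /\ le r (m p q).
Proof.
move=> he pp p0 pe r0 rp rq.
have ep : le 0 (e - p) by apply: leD.
have h1 := bla_mul_pos ep r0.
have h2 := bla_mul_pos ep (leD rp).
rewrite mBr (mBl e p p) (proj1 (he p)) pp subrr sub0r in h2.
have h3 : le (m (e - p) r) 0.
  by apply: leI; rewrite sub0r.
have h4 := bla_le_antisym h3 h1.
rewrite mBl (proj1 (he r)) in h4.
have rE : r = m p r by apply/eqP; rewrite -subr_eq0 h4.
split=> //.
have := bla_mul_pos p0 (leD rq).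
by rewrite mBr -rE => /leI.
Qed.
End H.


Theorem mainTheorem6 (R : realType) (V : completeNormedModType R)
  (A : BanachLatticeAlgebra V) (e : V) (he : is_identity A e) :
  is_boolean_algebra (bla_le A) (OI A e) 0 e
    (fun p => e - p)
    (fun p q => p + q - bla_mul A p q)
    (fun p q => bla_mul A p q)
  /\ (forall p q, OI A e p -> OI A e q ->
        bla_join A p q = p + q - bla_mul A p q /\
        bla_meet A p q = bla_mul A p q).
Proof.
case: he => he ne.
have e0 := e_pos he ne.
have m0l x : (bla_mul A) 0 x = 0.
  by have := mBl A 0 0 x; rewrite !subrr.
have m0r x : (bla_mul A) x 0 = 0.
  by have := mBr A x 0 0; rewrite !subrr.
have OIc p : OI A e p -> OI A e (e - p).
  case=> [pp [p0 pe]]; split; last split.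
  - by rewrite mBl !mBr (proj1 (he e)) (proj2 (he p)) (proj1 (he p)) pp subrr subr0.
  - exact: leD.
  - by apply: leI; rewrite opprB addrC subrK.
have meetE p q : OI A e p -> OI A e q -> bla_meet A p q = (bla_mul A) p q.
  case=> [pp [p0 pe]] [qq [q0 qe]].
  apply: bla_le_antisym.
    have r0 : (bla_le A) 0 (bla_meet A p q) by apply: bla_meet_greatest.
    exact: (proj2 (key he pp p0 pe r0 (bla_meet_lb_l _ _ _) (bla_meet_lb_r _ _ _))).
  apply: bla_meet_greatest.
    have := bla_mul_pos p0 (leD qe).
    by rewrite mBr (proj2 (he p)) => /leI.
  have := bla_mul_pos (leD pe) q0.
  by rewrite mBl (proj1 (he q)) => /leI.
have meetC p q : bla_meet A p q = bla_meet A q p.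
  by apply: bla_le_antisym; apply: bla_meet_greatest;
    [exact: bla_meet_lb_r|exact: bla_meet_lb_l|exact: bla_meet_lb_r|exact: bla_meet_lb_l].
have comm p q : OI A e p -> OI A e q -> (bla_mul A) p q = (bla_mul A) q p.
  by move=> hp hq; rewrite -meetE // meetC meetE.
have compE p q : e - (p + q - (bla_mul A) p q) = (bla_mul A) (e - p) (e - q).
  rewrite mBl !mBr (proj1 (he e)) (proj2 (he p)) (proj1 (he q)).
  by rewrite [p + q]addrC -addrA opprD addrA.
have meetS p q : OI A e p -> OI A e q -> OI A e ((bla_mul A) p q).
  move=> hp hq.
  case: (hp) => [pp [p0 pe]]; case: (hq) => [qq [q0 qe]].
  rewrite -meetE //; split; last split.
  - rewrite meetE // -bla_mulA (comm p q) // [bla_mul A q (bla_mul A q p)]bla_mulA qq.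
    by rewrite bla_mulA (comm p q) // -bla_mulA pp.
  - exact: bla_meet_greatest.
  - exact: bla_le_trans (bla_meet_lb_l _ _ _) pe.
have joinS p q : OI A e p -> OI A e q -> OI A e (p + q - (bla_mul A) p q).
  move=> hp hq.
  have := OIc _ (meetS _ _ (OIc _ hp) (OIc _ hq)).
  by rewrite -compE opprB addrC subrK.
have joinE p q : OI A e p -> OI A e q -> bla_join A p q = p + q - (bla_mul A) p q.
  move=> hp hq.
  case: (hp) => [pp [p0 pe]]; case: (hq) => [qq [q0 qe]].
  have ub1 : (bla_le A) p (p + q - (bla_mul A) p q).
    apply: leI.
    have -> : p + q - (bla_mul A) p q - p = (bla_mul A) (e - p) q.
      by rewrite mBl (proj1 (he q)) addrAC [p + q]addrC addrK.
    exact: bla_mul_pos (leD pe) q0.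
  have ub2 : (bla_le A) q (p + q - (bla_mul A) p q).
    apply: leI.
    have -> : p + q - (bla_mul A) p q - q = (bla_mul A) p (e - q).
      by rewrite mBr (proj2 (he p)) addrAC addrK.
    exact: bla_mul_pos p0 (leD qe).
  apply: bla_le_antisym; first exact: bla_join_least.
  have te : (bla_le A) (bla_join A p q) e by exact: bla_join_least.
  case: (OIc _ hp) => [pp' [p0' pe']].
  have t0 : (bla_le A) 0 (e - bla_join A p q) by apply: leD.
  have l1 : (bla_le A) (e - bla_join A p q) (e - p).
    apply: leI; rewrite opprB addrC addrA subrK; apply: leD; exact: bla_join_ub_l.
  have l2 : (bla_le A) (e - bla_join A p q) (e - q).
    apply: leI; rewrite opprB addrC addrA subrK; apply: leD; exact: bla_join_ub_r.
  have := proj2 (key he pp' p0' pe' t0 l1 l2).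
  rewrite -compE => /leD; rewrite [- (e - _)]opprB addrC addrA subrK => /leI //.
have OI0 : OI A e 0.
  by split; [rewrite m0l|split; [exact: bla_le_refl|exact: e0]].
have OIe : OI A e e.
  by split; [rewrite (proj1 (he e))|split; [exact: e0|exact: bla_le_refl]].
split; last by move=> p q hp hq; split; [exact: joinE|exact: meetE].
split; first by [].
split; first by split => //; move=> p q hp hq; split; [exact: joinS|exact: meetS].
split; first by move=> p [_ [p0 pe]].
split.
  move=> p q hp hq; rewrite -joinE // -meetE //; split; split.
  - exact: bla_join_ub_l.
  - exact: bla_join_ub_r.
  - by move=> r _; apply: bla_join_least.
  - exact: bla_meet_lb_l.
  - exact: bla_meet_lb_r.
  - by move=> r _; apply: bla_meet_greatest.
split.
  move=> p q r hp hq hr.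
  rewrite mBr bla_mulDr; congr (_ - _).
  rewrite -bla_mulA [bla_mul A q (bla_mul A p r)]bla_mulA -(comm p q) //.
  by rewrite -bla_mulA [RHS]bla_mulA (proj1 hp).
move=> p [pp _]; split.
  by rewrite mBr (proj2 (he p)) pp subrr subr0 addrC subrK.
by rewrite mBr (proj2 (he p)) pp subrr.
Qed.
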